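(* Let $\alpha>0$, $\rho>0$, and let $N\ge1$ be such that $\lambda_j:=(\pi j)^2-\alpha<\rho$ for $j=1,\dots,N$ and $\lambda_j\ge\rho$ for $j\ge N+1$. Let $\rho<\gamma_1<\gamma_2<\dots<\gamma_N$. Let $\phi_j(x)=\sin(\pi jx)$, let $B_0$ be the $N\times N$ matrix with entries $(B_0)_{ij}=\phi_i'(1)\phi_j'(1)$, let $\Lambda_{\gamma_k}=\mathrm{diag}\big(\frac{1}{\gamma_k-\lambda_i}\big)_{1\le i\le N}$ and $B_k=\Lambda_{\gamma_k}B_0\Lambda_{\gamma_k}$ for $k=1,\dots,N$. Then the matrix $B_1+B_2+\dots+B_N$ is invertible. *)

(* Defs.v *)
From HB Require Import structures.
From mathcomp Require Import all_boot all_order all_algebra.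
From mathcomp Require Import all_classical all_reals all_analysis.
Set Implicit Arguments. Unset Strict Implicit. Unset Printing Implicit Defensive.
Import Order.TTheory GRing.Theory Num.Theory.
Local Open Scope ring_scope.

Definition lam {R : realType} (alpha : R) (j : nat) : R :=
  (pi * j%:R) ^+ 2 - alpha.

Definition phi {R : realType} (j : nat) : R -> R :=
  fun x => sin (pi * j%:R * x).

(* B0 (N x N), 0-based index i stands for mode i+1 *)
Definition B0 {R : realType} (N : nat) : 'M[R]_N :=
  \matrix_(i < N, j < N) (derive1 (phi i.+1) 1 * derive1 (phi j.+1) 1).

Definition Lam {R : realType} (N : nat) (alpha g : R) : 'M[R]_N :=
  diag_mx (\row_(i < N) (g - lam alpha i.+1)^-1).

Definition Bk {R : realType} (N : nat) (alpha g : R) : 'M[R]_N :=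
  Lam N alpha g *m B0 N *m Lam N alpha g.

(* Main.v *)
Require Import Defs.
From mathcomp Require Import zify ring.
From HB Require Import structures.
From mathcomp Require Import all_boot all_order all_algebra.
From mathcomp Require Import all_classical all_reals all_analysis.
Import Order.TTheory GRing.Theory Num.Theory.
Local Open Scope ring_scope.
Lemma dphi (R : realType) (j : nat) : derive1 (@phi R j) 1 = cos (pi * j%:R) * (pi * j%:R).
Proof.
have -> : @phi R j = sin \o (fun x => (pi * j%:R) * x) by [].
have H : is_derive (1:R) 1 (sin \o (fun x : R => (pi * j%:R) * x)) (cos (pi * j%:R * 1) * (pi * j%:R)).
  apply: is_derive1_comp.
  have := @is_deriveZ R R R (fun x => x) (pi * j%:R) 1 1 1 _.
  by rewrite /= scaler1 => /(_ _); apply.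
by rewrite derive1E derive_val mulr1.
Qed.

Lemma sin_npi (R : realType) (j : nat) : sin (pi * j%:R) = 0 :> R.
Proof.
elim: j => [|j IH]; first by rewrite mulr0 sin0.
by rewrite -addn1 natrD mulrDr mulr1 sinDpi IH oppr0.
Qed.

Lemma c_neq0 (R : realType) (j : nat) : (0 < j)%N -> derive1 (@phi R j) 1 != 0.
Proof.
move=> j0; rewrite dphi mulf_neq0 //.
  apply/negP => /eqP h; have := sin0cos1 (sin_npi R j); rewrite h normr0 => /eqP; rewrite eq_sym oner_eq0.
  done.
by rewrite mulf_neq0 ?pnatr_eq0 -?lt0n // gt_eqF // pi_gt0.
Qed.
Lemma cauchy (R : fieldType) n (l g a : 'I_n -> R) :
  injective l -> injective g -> (forall i k, g k != l i) ->
  (forall k, \sum_i a i / (g k - l i) = 0) -> forall i, a i = 0.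
Proof.
move=> linj ginj gl H.
pose Q i := \prod_(m | m != i) ('X - (l m)%:P).
pose P := \sum_i a i *: Q i.
have sQ i : size (Q i) = n.
  rewrite /Q size_prod; last by move=> m _; rewrite -size_poly_eq0 size_XsubC.
  under eq_bigr do rewrite size_XsubC.
  rewrite sumr_const cardC1 card_ord.
  case: n i {linj ginj gl H a l g Q P} => [[]//|n i] /=.
  by lia.
have Pg k : P.[g k] = 0.
  rewrite /P horner_sum; transitivity (\prod_m (g k - l m) * \sum_i a i / (g k - l i)); last by rewrite H mulr0.
  rewrite mulr_sumr.
  apply: eq_bigr => i _; rewrite hornerZ /Q horner_prod [in RHS](bigD1 i) //=.
  under eq_bigr do rewrite hornerXsubC.
  have : g k - l i != 0 by rewrite subr_eq0.
  move: (\prod_(_ | _) _) => X d0; field.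
  by [].
have P0 : P = 0.
  apply: (@roots_geq_poly_eq0 _ _ [seq g k | k <- enum 'I_n]).
  - by apply/allP => x /mapP [k _ ->]; apply/rootP.
  - by rewrite map_inj_uniq ?enum_uniq.
  rewrite size_map size_enum_ord.
  apply: (leq_trans (size_sum _ _ _)).
  by apply/bigmax_leqP => i _; rewrite (leq_trans (size_scale_leq _ _)) ?sQ.
move=> i.
have : P.[l i] = a i * \prod_(m | m != i) (l i - l m).
  rewrite /P horner_sum (bigD1 i) //= big1 ?addr0.
    by rewrite hornerZ /Q horner_prod; under eq_bigr do rewrite hornerXsubC.
  move=> j ji; rewrite hornerZ /Q horner_prod (bigD1 i) 1?eq_sym //=.
  by rewrite hornerXsubC subrr mul0r mulr0.
rewrite P0 horner0 => /esym/eqP; rewrite mulf_eq0 => /orP [/eqP //|].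
rewrite prodf_seq_eq0 => /hasP [m _ /andP [mi]].
by rewrite subr_eq0 => /eqP /linj mie; rewrite mie eqxx in mi.
Qed.

Lemma gamma_lt (R : realType) (N : nat) (gamma : nat -> R)
  (hginc : forall k : nat, (1 <= k < N)%N -> gamma k < gamma k.+1) :
  forall d k, (1 <= k)%N -> (k + d.+1 <= N)%N -> gamma k < gamma (k + d.+1)%N.
Proof.
elim=> [|d IH] k k1 kN.
  by rewrite (_ : (k + 1 = k.+1)%N); [apply: hginc; lia | lia].
apply: (lt_trans (IH k k1 _)); first lia.
rewrite (_ : (k + d.+2 = (k + d.+1).+1)%N); last lia.
apply: hginc; lia.
Qed.

Theorem lemma5p2 (R : realType) (alpha rho : R) (N : nat) (gamma : nat -> R)
  (halpha : 0 < alpha) (hrho : 0 < rho) (hN : (1 <= N)%N)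
  (hlow : forall j : nat, (1 <= j <= N)%N -> lam alpha j < rho)
  (hhigh : forall j : nat, (N.+1 <= j)%N -> rho <= lam alpha j)
  (hg1 : rho < gamma 1%N)
  (hginc : forall k : nat, (1 <= k < N)%N -> gamma k < gamma k.+1) :
  (\sum_(1 <= k < N.+1) Bk N alpha (gamma k)) \in unitmx.
Proof.
pose c (i : 'I_N) : R := derive1 (@phi R i.+1) 1.
pose l (i : 'I_N) : R := lam alpha i.+1.
pose gg (k : 'I_N) : R := gamma k.+1.
pose V := \matrix_(i < N, k < N) (c i / (gg k - l i)).
have -> : \sum_(1 <= k < N.+1) Bk N alpha (gamma k) = V *m V^T.
  rewrite big_add1 /= big_mkord; apply/matrixP => i j.
  rewrite summxE !mxE; apply: eq_bigr => k _.
  rewrite /Bk /Lam mul_diag_mx mul_mx_diag.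
  rewrite !mxE /= /c /gg /l.
  set x := derive1 (@phi R i.+1) 1; set z := derive1 (@phi R j.+1) 1.
  set a := gamma k.+1 - _; set b := gamma k.+1 - lam alpha j.+1.
  ring.
have gmono : forall k m, (1 <= k)%N -> (k < m)%N -> (m <= N)%N -> gamma k < gamma m.
  move=> k m k1 km mN; have := @gamma_lt R N gamma hginc (m - k.+1) k k1.
  by rewrite (_ : (k + (m - k.+1).+1 = m)%N); [apply; lia | lia].
have ginj : injective gg.
  move=> k m; rewrite /gg => e; apply/val_inj/eqP; rewrite /= -eqSS.
  case: (ltngtP k.+1 m.+1) => // h.
    by have := gmono (k.+1) (m.+1) isT h (ltn_ord m); rewrite e ltxx.
  by have := gmono (m.+1) (k.+1) isT h (ltn_ord k); rewrite e ltxx.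
have gge (k : 'I_N) : rho < gg k.
  rewrite /gg; case: (posnP k) => [->//|k0].
  by apply: (lt_trans hg1); apply: gmono => //; lia.
have gl i k : gg k != l i.
  apply/eqP => e; have := gge k; rewrite e /l => h.
  have := hlow i.+1; rewrite ltn_ord /= => /(_ isT); rewrite ltNge (ltW h) //.
have linj : injective l.
  move=> i j; rewrite /l /lam => /eqP; rewrite subr_eq addrNK eqrXn2 //;
    last (by rewrite mulr_ge0 ?pi_ge0); last (by rewrite mulr_ge0 ?pi_ge0).
  rewrite (inj_eq (mulfI _)); last by rewrite gt_eqF ?pi_gt0.
  by rewrite eqr_nat eqSS => /eqP /val_inj.
rewrite -row_free_unit; apply: inj_row_free => v.
rewrite mulmxA => hv.
set y := v *m V in hv.
have hy : y *m y^T = 0 by rewrite {2}/y trmx_mul mulmxA hv mul0mx.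
have y0 : forall k, y 0 k = 0.
  move=> k.
  have := congr1 (fun A : 'M[R]_(1, 1) => A 0 0) hy; rewrite [(y *m _) _ _]mxE [(0 : 'M[R]_(1,1)) _ _]mxE.
  under eq_bigr do rewrite [y^T _ _]mxE -expr2.
  move/psumr_eq0P => h; apply/eqP; rewrite -sqrf_eq0; apply/eqP.
  by apply: h => // j _; apply: sqr_ge0.
apply/rowP => i; rewrite mxE.
suff : v 0 i * c i = 0.
  by move/eqP; rewrite mulf_eq0 (negPf (@c_neq0 R i.+1 (ltn0Sn _))) orbF => /eqP.
apply: (@cauchy R N l gg (fun i => v 0 i * c i) linj ginj gl) => k.
rewrite -[RHS](y0 k) [RHS]mxE; apply: eq_bigr => j _.
by rewrite !mxE mulrA.
Qed.
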